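(* Let $S$ be a commutative semigroup and $H$ a subsemigroup of $S$. Let $\{H_i : i\in I\}$ be a nonempty family ($I\neq\emptyset$) of subsets of $S$ such that $H=\bigcap_{i\in I}\mathrm{Sep}\,H_i$. Then the relation $$P(H;H_i,I)=\{(a,b)\in S\times S:\ H_i\dots a=H_i\dots b \text{ for all } i\in I\}$$ is a monoid congruence on $S$ such that $H$ is a congruence class and is the identity element of the factor semigroup $S/P(H;H_i,I)$. Conversely, for every monoid congruence $p$ on a commutative semigroup $S$ there exist a subsemigroup $H$ of $S$ and a nonempty family $\{H_i: i\in I\}$ of subsets of $S$ with $H=\bigcap_{i\in I}\mathrm{Sep}\,H_i$ such that $p=P(H;H_i,I)$.
   Context: For a semigroup $S$ and $A\subseteq S$, $\mathrm{Sep}\,A$ (the separator of $A$) is the set of all $x\in S$ with $xA\subseteq A$, $Ax\subseteq A$, $x(S\setminus A)\subseteq S\setminus A$ and $(S\setminus A)x\subseteq S\setminus A$. For $A\subseteq S$ and $a\in S$, $A\dots a=\{(x,y)\in S\times S:\ xay\in A\}$. A congruence $p$ on $S$ is a monoid congruence if the factor semigroup $S/p$ is a monoid (has an identity element). *)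

(* Defs.v *)
Section Defs.
Context {S : Type} (mul : S -> S -> S).

Definition associative_op : Prop :=
  forall x y z, mul x (mul y z) = mul (mul x y) z.
Definition commutative_op : Prop := forall x y, mul x y = mul y x.

Definition subsemigroup (H : S -> Prop) : Prop :=
  (exists h, H h) /\ (forall x y, H x -> H y -> H (mul x y)).

Definition Sep (A : S -> Prop) (x : S) : Prop :=
  (forall a, A a -> A (mul x a)) /\ (forall a, A a -> A (mul a x)) /\
  (forall b, ~ A b -> ~ A (mul x b)) /\ (forall b, ~ A b -> ~ A (mul b x)).

Definition dots (A : S -> Prop) (a : S) (xy : S * S) : Prop :=
  A (mul (mul (fst xy) a) (snd xy)).

(* P(H; H_i, I) = { (a,b) | H_i...a = H_i...b for all i }  (H only a label) *)
Definition Prel {I : Type} (Hs : I -> S -> Prop) (a b : S) : Prop :=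
  forall i, forall xy : S * S, dots (Hs i) a xy <-> dots (Hs i) b xy.

Definition congruence (p : S -> S -> Prop) : Prop :=
  (forall a, p a a) /\ (forall a b, p a b -> p b a) /\
  (forall a b c, p a b -> p b c -> p a c) /\
  (forall a b c, p a b -> p (mul c a) (mul c b) /\ p (mul a c) (mul b c)).

(* the factor semigroup S/p has an identity element (the class of e) *)
Definition monoid_congruence (p : S -> S -> Prop) : Prop :=
  congruence p /\ exists e, forall s, p (mul e s) s /\ p (mul s e) s.

Definition is_class (p : S -> S -> Prop) (H : S -> Prop) : Prop :=
  exists a, forall x, H x <-> p a x.

Definition identity_class (p : S -> S -> Prop) (H : S -> Prop) : Prop :=
  is_class p H /\ forall h s, H h -> p (mul h s) s /\ p (mul s h) s.

End Defs.

(* Main.v *)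
Require Import Defs.
From Stdlib Require Import Classical.

Lemma sepiff {S} (mul : S -> S -> S) (A : S -> Prop) h z :
  Sep mul A h -> (A (mul h z) <-> A z).
Proof.
  intros [H1 [H2 [H3 H4]]]; split; intro Hz; auto.
  destruct (classic (A z)) as [?|Hn]; auto. exfalso; exact (H3 z Hn Hz).
Qed.

Lemma part1 (S : Type) (mul : S -> S -> S) :
     associative_op mul -> commutative_op mul ->
     forall (H : S -> Prop), subsemigroup mul H ->
     forall (I : Type) (Hs : I -> S -> Prop), inhabited I ->
     (forall x, H x <-> (forall i, Sep mul (Hs i) x)) ->
     monoid_congruence mul (Prel mul Hs) /\
     identity_class mul (Prel mul Hs) H.
Proof.
  intros As Co H [[h0 Hh0] Hcl] I Hs _ HE.
  assert (Cg : congruence mul (Prel mul Hs)).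
  { unfold congruence, Prel, dots; split; [|split; [|split]].
    - intros; tauto.
    - intros a b Hab i xy; rewrite Hab; tauto.
    - intros a b c Hab Hbc i xy; rewrite Hab, Hbc; tauto.
    - intros a b c Hab; split; intros i [x y]; simpl.
      + rewrite !As. apply (Hab i (mul x c, y)).
      + rewrite !(As x), <- !(As _ c y). apply (Hab i (x, mul c y)). }
  assert (K : forall h s, H h -> Prel mul Hs (mul h s) s).
  { intros h s Hh; unfold Prel; intros i [x y]; unfold dots; simpl.
    assert (E : mul (mul x (mul h s)) y = mul h (mul (mul x s) y)).
    { rewrite (As x h s), (Co x h), <- (As h x s), <- (As h). reflexivity. }
    rewrite E. apply sepiff. apply HE; auto. }
  destruct Cg as [Rf [Sy [Tr Cp]]].
  split.
  - split; [exact (conj Rf (conj Sy (conj Tr Cp)))|]. exists h0; intro s; split; auto.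
    rewrite Co; auto.
  - split.
    + exists h0; intro x; split.
      * intro Hx. apply Tr with (mul x h0). apply Sy, K; auto.
        rewrite Co. apply K; auto.
      * intro Hp. apply HE; intro i.
        assert (KI : forall a, Hs i a <-> Hs i (mul x a)).
        { intro a. assert (Sh : Sep mul (Hs i) h0) by (apply HE; auto).
          rewrite <- (sepiff mul (Hs i) h0 a Sh), <- (sepiff mul (Hs i) h0 (mul h0 a) Sh).
          rewrite (As h0 h0 a).
          rewrite <- (sepiff mul (Hs i) h0 (mul x a) Sh), (As h0 x a).
          apply (Hp i (h0, a)). }
        unfold Sep; repeat split; intros a Ha; try rewrite (Co a x).
        all: rewrite <- KI; auto.
    + intros h s Hh; split; auto. rewrite Co; auto.
Qed.

Lemma part2 (S : Type) (mul : S -> S -> S) :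
     associative_op mul -> commutative_op mul ->
     forall p : S -> S -> Prop, monoid_congruence mul p ->
     exists (H : S -> Prop) (I : Type) (Hs : I -> S -> Prop),
       subsemigroup mul H /\ inhabited I /\
       (forall x, H x <-> (forall i, Sep mul (Hs i) x)) /\
       (forall a b, p a b <-> Prel mul Hs a b).
Proof.
  intros As Co p [[Rf [Sy [Tr Cp]]] [e He]].
  exists (p e), S, (fun i z => p i z).
  assert (L : forall x a, p e x -> p (mul x a) a).
  { intros x a Hx. apply Tr with (mul e a); [|apply He].
    apply Cp. auto. }
  split; [|split; [constructor; exact e|split]].
  - split; [exists e; auto|]. intros x y Hx Hy.
    apply Tr with y; [exact Hy|]. apply Sy, L; exact Hx.
  - intro x; split.
    + intros Hx i; unfold Sep; repeat split; intros a Ha;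
        try rewrite (Co a x).
      all: first [ exact (Tr _ _ _ Ha (Sy _ _ (L x a Hx)))
                 | intro Hb; apply Ha; exact (Tr _ _ _ Hb (L x a Hx)) ].
    + intro Hx. destruct (Hx e) as [H1 _].
      specialize (H1 e (Rf e)). apply Tr with (mul x e); auto.
      rewrite Co. apply He.
  - intros a b; split.
    + intros Hab; unfold Prel; intros i [u v]; unfold dots; simpl.
      assert (Q : p (mul (mul u a) v) (mul (mul u b) v)).
      { apply Cp. apply Cp. auto. }
      split; intro; eauto.
    + intro Hp. destruct (Hp a (e, e)) as [H1 _]; unfold dots in H1; simpl in H1.
      assert (Qa : forall z, p (mul (mul e z) e) z).
      { intro z. apply Tr with (mul e z); apply He. }
      apply Tr with (mul (mul e b) e); [|apply Qa].
      apply H1. apply Sy, Qa.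
Qed.

Theorem theorem3 :
  (forall (S : Type) (mul : S -> S -> S),
     associative_op mul -> commutative_op mul ->
     forall (H : S -> Prop), subsemigroup mul H ->
     forall (I : Type) (Hs : I -> S -> Prop), inhabited I ->
     (forall x, H x <-> (forall i, Sep mul (Hs i) x)) ->
     monoid_congruence mul (Prel mul Hs) /\
     identity_class mul (Prel mul Hs) H)
  /\
  (forall (S : Type) (mul : S -> S -> S),
     associative_op mul -> commutative_op mul ->
     forall p : S -> S -> Prop, monoid_congruence mul p ->
     exists (H : S -> Prop) (I : Type) (Hs : I -> S -> Prop),
       subsemigroup mul H /\ inhabited I /\
       (forall x, H x <-> (forall i, Sep mul (Hs i) x)) /\
       (forall a b, p a b <-> Prel mul Hs a b)).
Proof.
  split; [exact part1 | exact part2].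
Qed.
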